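(* (a) For all $y\ge x_0\ge0$, \[F'(y)=\exp\{-y^2/2+x_0^2/2\}F'(x_0)+\int_{x_0}^y\exp\{-y^2/2+z^2/2\}F(z)(F(z)-2)\,dz.\] (b) $\lim_{y\to\infty}e^{y^2/2}\frac{F'(y)}{y^2}=-c_0$. (c) $1<F(0)<2$. (d) $F$ is strictly decreasing on $[0,\infty)$.
   Context: $F:\mathbb{R}\to(0,\infty)$ is defined by $F(x)=V^\infty(1,x)=\lim_{\lambda\to\infty}V^\lambda(1,x)$, where $V^\lambda$ is the solution of $\partial_tV=\frac12\partial_x^2V-\frac12V^2$, $V(0,\cdot)=\lambda\delta_0$. It is known that $F$ is symmetric, $C^2$ on $\mathbb{R}$, positive, and is the unique such function satisfying $\frac{F''(y)}2+\frac y2F'(y)+F(y)-\frac{F(y)^2}2=0$, $F'(0)=0$, and $F(y)\sim c_0ye^{-y^2/2}$ as $y\to\infty$ (ratio tends to one), for some constant $c_0>0$; $c_0$ denotes this constant. *)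

(* Defs.v *)
From Stdlib Require Import Reals.
From Coquelicot Require Import Coquelicot.
Open Scope R_scope.

(* [is_F F c0]: F : R -> R is symmetric, positive, C^2 on R, solves
     F''(y)/2 + (y/2) F'(y) + F(y) - F(y)^2/2 = 0,  F'(0) = 0,
   and F(y) ~ c0 * y * exp(-y^2/2) as y -> +oo (ratio tends to 1), c0 > 0.
   By the paper (context), F = V^oo(1,.) is the unique such function. *)
Definition is_F (F : R -> R) (c0 : R) : Prop :=
  (forall y, F (- y) = F y) /\
  (forall y, 0 < F y) /\
  (forall y, ex_derive F y) /\
  (forall y, ex_derive (Derive F) y) /\
  (forall y, continuous (Derive (Derive F)) y) /\
  (forall y, Derive (Derive F) y / 2 + y / 2 * Derive F y + F y - F y ^ 2 / 2 = 0) /\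
  Derive F 0 = 0 /\
  0 < c0 /\
  is_lim (fun y => F y / (c0 * y * exp (- y ^ 2 / 2))) p_infty 1.

(* Main.v *)
Require Import Defs.
From Stdlib Require Import Reals Lra Psatz.
From Coquelicot Require Import Coquelicot.
Open Scope R_scope.

Lemma mvt (f df : R -> R) a b : a < b -> (forall c, a <= c <= b -> is_derive f c (df c)) ->
  exists c, a < c < b /\ f b - f a = df c * (b - a).
Proof.
  intros Hab Hd. destruct (MVT_cor2 f df a b Hab) as [c [H1 H2]].
  - intros c Hc; apply is_derive_Reals; auto.
  - exists c; auto.
Qed.

Lemma decr_strict f df a b : a < b -> (forall c, a <= c <= b -> is_derive f c (df c)) ->
  (forall c, a < c < b -> df c < 0) -> f b < f a.
Proof.
  intros Hab Hd Hn. destruct (mvt f df a b Hab Hd) as [c [Hc He]].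
  specialize (Hn c Hc). nra.
Qed.

Lemma decr_weak f df a b : a <= b -> (forall c, a <= c <= b -> is_derive f c (df c)) ->
  (forall c, a < c < b -> df c <= 0) -> f b <= f a.
Proof.
  intros Hab Hd Hn. destruct (Req_dec a b) as [->|Hne]; [lra|].
  destruct (mvt f df a b ltac:(lra) Hd) as [c [Hc He]].
  specialize (Hn c Hc). nra.
Qed.

Lemma dF F c0 : is_F F c0 -> forall y, is_derive F y (Derive F y).
Proof. intros HF y. destruct HF as (_&_&H&_). apply Derive_correct, H. Qed.

Lemma ddF F c0 : is_F F c0 -> forall y, is_derive (Derive F) y (Derive (Derive F) y).
Proof. intros HF y. destruct HF as (_&_&_&H&_). apply Derive_correct, H. Qed.

Lemma odeF F c0 : is_F F c0 -> forall y,
  Derive (Derive F) y = F y * (F y - 2) - y * Derive F y.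
Proof. intros HF y. destruct HF as (_&_&_&_&_&H&_). specialize (H y). nra. Qed.

Lemma contF F c0 : is_F F c0 -> forall y, continuity_pt F y.
Proof.
  intros HF y. destruct HF as (_&_&H&_).
  apply derivable_continuous_pt, ex_derive_Reals_0, H.
Qed.

Lemma dG F c0 : is_F F c0 -> forall y,
  is_derive (fun z => exp (z^2/2) * Derive F z) y (exp (y^2/2) * (F y * (F y - 2))).
Proof.
  intros HF y.
  assert (H1 := dF F c0 HF y). assert (H2 := ddF F c0 HF y).
  assert (He : is_derive (fun z => exp (z^2/2)) y (y * exp (y^2/2))).
  { auto_derive; auto. replace (y * (y * 1) * / 2) with (y ^ 2 / 2) by (unfold Rdiv; ring). field. }
  eapply is_derive_ext. { intros t; reflexivity. }
  replace (exp (y^2/2) * (F y * (F y - 2))) with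
    (y * exp (y^2/2) * Derive F y + exp (y^2/2) * Derive (Derive F) y).
  2:{ rewrite (odeF F c0 HF y). ring. }
  apply (is_derive_mult (fun z => exp (z^2/2)) (Derive F)); auto.
  intros; apply Rmult_comm.
Qed.

Lemma part_a F c0 : is_F F c0 ->
  (forall x0 y, 0 <= x0 -> x0 <= y ->
     Derive F y =
       exp (- y ^ 2 / 2 + x0 ^ 2 / 2) * Derive F x0
       + RInt (fun z => exp (- y ^ 2 / 2 + z ^ 2 / 2) * F z * (F z - 2)) x0 y).
Proof.
  intros HF x0 y _ _.
  set (f := fun z => exp (- y ^ 2 / 2 + z ^ 2 / 2) * Derive F z).
  assert (Hi : is_RInt (fun z => exp (- y ^ 2 / 2 + z ^ 2 / 2) * F z * (F z - 2)) x0 y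
                 (minus (f y) (f x0))).
  { apply (is_RInt_derive (V:=R_CompleteNormedModule) f).
    - intros x _. unfold f.
      assert (H1 := dF F c0 HF x). assert (H2 := ddF F c0 HF x).
      assert (He : is_derive (fun z => exp (- y ^ 2 / 2 + z^2/2)) x
                     (x * exp (- y ^ 2 / 2 + x^2/2))).
      { auto_derive; auto.
        replace (- (y * (y * 1)) / 2 + x * (x * 1) * / 2) with (- y ^ 2 / 2 + x ^ 2 / 2)
          by (unfold Rdiv; ring). field. }
      replace (exp (- y ^ 2 / 2 + x ^ 2 / 2) * F x * (F x - 2)) with
        (x * exp (- y ^ 2 / 2 + x^2/2) * Derive F x
          + exp (- y ^ 2 / 2 + x^2/2) * Derive (Derive F) x).
      2:{ rewrite (odeF F c0 HF x). ring. }
      apply (is_derive_mult (fun z => exp (- y ^ 2 / 2 + z^2/2)) (Derive F)); auto.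
      intros; apply Rmult_comm.
    - intros x _. apply continuity_pt_filterlim, derivable_continuous_pt, ex_derive_Reals_0.
      destruct HF as (_&_&H&_). auto_derive. auto. }
  rewrite (is_RInt_unique _ _ _ _ Hi). unfold minus, plus, opp, f; simpl.
  replace (- (y * (y * 1)) / 2 + y * (y * 1) / 2) with 0 by field. rewrite exp_0. ring.
Qed.

Lemma lim_mult' f g x (a b : R) : is_lim f x a -> is_lim g x b -> is_lim (fun y => f y * g y) x (a*b).
Proof. intros H1 H2. apply (is_lim_mult f g x a b H1 H2). simpl. exact I. Qed.
Lemma lim_plus' f g x (a b : R) : is_lim f x a -> is_lim g x b -> is_lim (fun y => f y + g y) x (a+b).
Proof. intros H1 H2. apply (is_lim_plus f g x a b (a+b) H1 H2). simpl. reflexivity. Qed.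

Lemma lim_bound (g : R -> R) K : (forall y, 1 < y -> Rabs (g y) <= K / y) -> is_lim g p_infty 0.
Proof.
  intros Hb. apply is_lim_spec. intros eps. simpl.
  exists (Rmax 1 (Rabs K / eps)). intros y Hy.
  assert (H1 : 1 < y) by (eapply Rle_lt_trans; [apply Rmax_l|exact Hy]).
  assert (H2 : Rabs K / eps < y) by (eapply Rle_lt_trans; [apply Rmax_r|exact Hy]).
  pose proof (cond_pos eps) as He.
  rewrite Rminus_0_r. eapply Rle_lt_trans; [apply Hb; lra|].
  apply Rmult_lt_reg_r with y; [lra|]. unfold Rdiv. rewrite Rmult_assoc, Rinv_l by lra.
  apply Rmult_lt_reg_r with (/ eps) ; [apply Rinv_0_lt_compat; lra|].
  pose proof (Rle_abs K). replace (eps * y * / eps) with y by (field; lra).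
  assert (K * 1 * / eps <= Rabs K / eps). { unfold Rdiv. apply Rmult_le_compat_r.
    apply Rlt_le, Rinv_0_lt_compat; lra. lra. }
  lra.
Qed.

Lemma exp_neg y : exp (- y ^ 2 / 2) = / exp (y ^ 2 / 2).
Proof. rewrite <- exp_Ropp. f_equal. field. Qed.

Lemma exp_b1 y : 1 < y -> 0 < y * exp (- y ^ 2 / 2) <= 2 / y.
Proof.
  intros Hy. rewrite exp_neg. pose proof (exp_pos (y^2/2)).
  assert (1 + y^2/2 < exp (y^2/2)) by (apply exp_ineq1; nra).
  split. apply Rmult_lt_0_compat; [lra| apply Rinv_0_lt_compat; lra].
  apply Rmult_le_reg_r with (exp (y^2/2)); [lra|].
  rewrite Rmult_assoc, Rinv_l by lra.
  apply Rmult_le_reg_r with y; [lra|].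
  replace (2 / y * exp (y ^ 2 / 2) * y) with (2 * exp (y^2/2)) by (field; lra). nra.
Qed.

Lemma exp_b2 y : 1 < y -> 0 < y ^ 2 * exp (- y ^ 2 / 2) <= 16 / y.
Proof.
  intros Hy. rewrite exp_neg. pose proof (exp_pos (y^2/2)).
  assert (1 + y^2/4 < exp (y^2/4)) by (apply exp_ineq1; nra).
  assert (Hs : exp (y^2/2) = exp (y^2/4) * exp (y^2/4)) by (rewrite <- exp_plus; f_equal; field).
  assert (y^4/16 < exp (y^2/2)) by (rewrite Hs; nra).
  split. apply Rmult_lt_0_compat; [nra| apply Rinv_0_lt_compat; lra].
  apply Rmult_le_reg_r with (exp (y^2/2)); [lra|].
  rewrite Rmult_assoc, Rinv_l by lra.
  apply Rmult_le_reg_r with y; [lra|].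
  replace (16 / y * exp (y ^ 2 / 2) * y) with (16 * exp (y^2/2)) by (field; lra). nra.
Qed.

Lemma lim_k1 : is_lim (fun y => y * exp (- y ^ 2 / 2)) p_infty 0.
Proof. apply (lim_bound _ 2). intros y Hy. destruct (exp_b1 y Hy). rewrite Rabs_pos_eq; lra. Qed.

Lemma lim_k2 : is_lim (fun y => y ^ 2 * exp (- y ^ 2 / 2)) p_infty 0.
Proof. apply (lim_bound _ 16). intros y Hy. destruct (exp_b2 y Hy). rewrite Rabs_pos_eq; lra. Qed.

Lemma limF0 F c0 : is_F F c0 -> is_lim F p_infty 0.
Proof.
  intros HF. destruct HF as (_&_&_&_&_&_&_&Hc0&Hlim).
  assert (H := lim_mult' _ _ _ _ _ Hlim (lim_mult' _ _ _ _ _ (is_lim_const c0 p_infty) lim_k1)).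
  replace (Finite 0) with (Finite (1 * (c0 * 0))) by (f_equal; ring).
  eapply is_lim_ext_loc; [|exact H]. exists 0. intros y Hy. cbv beta.
  pose proof (exp_pos (- y ^ 2 / 2)).
  assert (c0 * y * exp (- y ^ 2 / 2) <> 0) by (apply Rgt_not_eq; apply Rmult_lt_0_compat; nra).
  field; repeat split; lra.
Qed.

Lemma limh F c0 : is_F F c0 ->
  is_lim (fun y => F y / (c0 * y * exp (- y ^ 2 / 2)) * (c0 * (F y - 2) / 2)) p_infty (- c0).
Proof.
  intros HF. assert (H0 := limF0 F c0 HF). destruct HF as (_&_&_&_&_&_&_&Hc0&Hlim).
  assert (H1 : is_lim (fun y => c0 * (F y - 2) / 2) p_infty (c0 * (0 - 2) / 2)).
  { assert (H2 := lim_mult' _ _ _ _ _ (is_lim_const c0 p_infty)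
       (lim_mult' _ _ _ _ _ (lim_plus' _ _ _ _ _ H0 (is_lim_const (-2) p_infty)) (is_lim_const (/2) p_infty))).
    replace (c0 * (0 - 2) / 2) with (c0 * ((0 + -2) * / 2)) by field.
    eapply is_lim_ext; [|exact H2]. intros y; cbv beta. unfold Rdiv; ring. }
  assert (H := lim_mult' _ _ _ _ _ Hlim H1).
  replace (Finite (- c0)) with (Finite (1 * (c0 * (0 - 2) / 2))) by (f_equal; field).
  exact H.
Qed.

Lemma part_b F c0 : is_F F c0 ->
  is_lim (fun y => exp (y ^ 2 / 2) * Derive F y / y ^ 2) p_infty (- c0).
Proof.
  intros HF. assert (Hh := limh F c0 HF). apply is_lim_spec in Hh.
  pose proof HF as HF'. destruct HF' as (_&_&_&_&_&_&_&Hc0&_).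
  set (h := fun y => F y / (c0 * y * exp (- y ^ 2 / 2)) * (c0 * (F y - 2) / 2)) in *.
  set (D := fun y => exp (y^2/2) * Derive F y + c0 * y^2).
  assert (HD : forall y, is_derive D y (exp (y^2/2) * (F y * (F y - 2)) + c0 * (2*y))).
  { intros y. apply (is_derive_plus (fun y => exp (y^2/2) * Derive F y) (fun y => c0*y^2)).
    apply (dG F c0 HF). auto_derive; auto. ring. }
  assert (HDh : forall c, 0 < c -> exp (c^2/2) * (F c * (F c - 2)) + c0 * (2*c) = 2*c*(h c + c0)).
  { intros c Hc. unfold h. rewrite exp_neg. pose proof (exp_pos (c^2/2)). field. lra. }
  apply is_lim_spec. intros eps. pose proof (cond_pos eps) as He.
  destruct (Hh (mkposreal (eps/4) ltac:(lra))) as [M1 HM1]. simpl in HM1.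
  set (A := Rmax M1 0 + 1).
  assert (HA1 : M1 < A) by (unfold A; pose proof (Rmax_l M1 0); lra).
  assert (HA0 : 0 < A) by (unfold A; pose proof (Rmax_r M1 0); lra).
  exists (Rmax (A+1) (2 * Rabs (D A) / eps + 1)). intros y Hy.
  assert (Hy1 : A + 1 < y) by (eapply Rle_lt_trans; [apply Rmax_l|exact Hy]).
  assert (Hy2 : 2 * Rabs (D A) / eps + 1 < y) by (eapply Rle_lt_trans; [apply Rmax_r|exact Hy]).
  destruct (mvt D _ A y ltac:(lra) (fun c _ => HD c)) as [c [Hc HDe]].
  rewrite HDh in HDe by lra.
  specialize (HM1 c ltac:(lra)).
  replace (h c - - c0) with (h c + c0) in HM1 by ring.
  assert (Hb : Rabs (D y - D A) <= y^2 * (eps/2)).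
  { rewrite HDe, Rabs_mult, Rabs_mult, (Rabs_pos_eq (2*c)), (Rabs_pos_eq (y - A)) by lra.
    pose proof (Rabs_pos (h c + c0)).
    assert (2*c*(y-A) <= 2*y^2) by nra.
    assert (0 <= 2*c*(y-A)) by nra.
    assert (2*c*Rabs (h c + c0) * (y-A) = (2*c*(y-A)) * Rabs (h c + c0)) by ring.
    assert ((2*c*(y-A)) * Rabs (h c + c0) <= (2*c*(y-A)) * (eps/4)) by (apply Rmult_le_compat_l; lra).
    nra. }
  assert (HDA : Rabs (D A) < y^2 * (eps/2)).
  { assert (Hq : 2 * Rabs (D A) / eps < y) by lra.
    assert (2 * Rabs (D A) < y * eps).
    { apply Rmult_lt_reg_r with (/eps). apply Rinv_0_lt_compat; lra.
      replace (y * eps * / eps) with y by (field; lra).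
      unfold Rdiv in Hq. exact Hq. }
    assert (0 <= (y^2 - y) * eps) by (apply Rmult_le_pos; nra). lra. }
  assert (HDy : Rabs (D y) < y^2 * eps).
  { replace (D y) with ((D y - D A) + D A) by ring.
    pose proof (Rabs_triang (D y - D A) (D A)). lra. }
  replace (exp (y ^ 2 / 2) * Derive F y / y ^ 2 - - c0) with (D y / y^2) by (unfold D; field; nra).
  unfold Rdiv. rewrite Rabs_mult, Rabs_inv, (Rabs_pos_eq (y^2)) by nra.
  apply Rmult_lt_reg_r with (y^2). nra.
  rewrite Rmult_assoc, Rinv_l by nra. lra.
Qed.

Lemma limdF F c0 : is_F F c0 -> is_lim (Derive F) p_infty 0.
Proof.
  intros HF. assert (H := lim_mult' _ _ _ _ _ (part_b F c0 HF) lim_k2).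
  replace (Finite 0) with (Finite (-c0 * 0)) by (f_equal; ring).
  eapply is_lim_ext_loc; [|exact H]. exists 0. intros y Hy. cbv beta.
  rewrite exp_neg. pose proof (exp_pos (y^2/2)). field. split; nra.
Qed.

Lemma limW F c0 : is_F F c0 -> is_lim (fun y => Derive F y + y * F y) p_infty 0.
Proof.
  intros HF. pose proof HF as HF'. destruct HF' as (_&_&_&_&_&_&_&Hc0&Hlim).
  assert (H := lim_mult' _ _ _ _ _ Hlim (lim_mult' _ _ _ _ _ (is_lim_const c0 p_infty) lim_k2)).
  assert (H2 := lim_plus' _ _ _ _ _ (limdF F c0 HF) H).
  replace (Finite 0) with (Finite (0 + 1 * (c0 * 0))) by (f_equal; ring).
  eapply is_lim_ext_loc; [|exact H2]. exists 0. intros y Hy. cbv beta.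
  pose proof (exp_pos (- y ^ 2 / 2)).
  assert (c0 * y * exp (- y ^ 2 / 2) <> 0) by (apply Rgt_not_eq; apply Rmult_lt_0_compat; nra).
  field; repeat split; lra.
Qed.

Lemma F_not2 F c0 : is_F F c0 -> F 0 <> 2 -> forall y, 0 <= y -> F y <> 2.
Proof.
  intros HF H0 y Hy Hy2.
  pose proof HF as HF'. destruct HF' as (_&Hpos&Hd1&Hd2&_&_&Hd0&_).
  set (E := fun y => Derive F y ^2/2 + F y ^2 - F y^3/3).
  assert (HE : forall t, is_derive E t (- t * Derive F t ^2)).
  { intros t. unfold E. auto_derive. repeat split; auto.
    change (Derive (fun x => Derive F x) t) with (Derive (Derive F) t).
    change (Derive (fun x => F x) t) with (Derive F t).
    rewrite (odeF F c0 HF t). field. }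
  assert (HEy : E y <= E 0).
  { apply (decr_weak E _ 0 y Hy (fun c _ => HE c)). intros c Hc.
    pose proof (pow2_ge_0 (Derive F c)). nra. }
  unfold E in HEy. rewrite Hd0, Hy2 in HEy.
  pose proof (pow2_ge_0 (Derive F y)). pose proof (Hpos 0).
  assert (Hc : (F 0 - 2)^2 * (F 0 + 1) <= 0) by nra.
  assert (Hn : F 0 - 2 <> 0) by lra. pose proof (Rsqr_pos_lt _ Hn) as Hs. unfold Rsqr in Hs.
  nra.
Qed.

Lemma exists_small F c0 : is_F F c0 -> exists T, 0 < T /\ F T < 1.
Proof.
  intros HF. assert (Hl := limF0 F c0 HF). apply is_lim_spec in Hl.
  destruct (Hl (mkposreal 1 Rlt_0_1)) as [M HM]. simpl in HM.
  exists (Rmax M 0 + 1). pose proof (Rmax_l M 0). pose proof (Rmax_r M 0).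
  specialize (HM (Rmax M 0 + 1) ltac:(lra)). rewrite Rminus_0_r in HM.
  pose proof (Rle_abs (F (Rmax M 0 + 1))). lra.
Qed.

Lemma F0_not2 F c0 : is_F F c0 -> F 0 <> 2.
Proof.
  intros HF H0. pose proof HF as HF'. destruct HF' as (_&Hpos&Hd1&Hd2&_&_&Hd0&_).
  destruct (exists_small F c0 HF) as [T [HT0 HT1]].
  destruct (continuity_ab_maj F 0 T ltac:(lra) (fun c _ => contF F c0 HF c)) as [Mx [HMx _]].
  set (K := 1 + F Mx).
  set (P := fun y => ((F y - 2)^2 + Derive F y^2) * exp (- K * y)).
  assert (HP : forall t, is_derive P t ((2*(F t-2)*Derive F t + 2*Derive F t*Derive (Derive F) t
                 - K*((F t - 2)^2 + Derive F t^2)) * exp (-K*t))).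
  { intros t. unfold P. auto_derive. repeat split; auto.
    change (Derive (fun x => Derive F x) t) with (Derive (Derive F) t).
    change (Derive (fun x => F x) t) with (Derive F t).
    ring. }
  assert (HPT : P T <= P 0).
  { apply (decr_weak P _ 0 T ltac:(lra) (fun c _ => HP c)). intros c Hc.
    rewrite (odeF F c0 HF c).
    pose proof (exp_pos (-K*c)).
    assert (Hf : F c <= F Mx) by (apply HMx; lra).
    pose proof (Hpos c).
    set (a := F c - 2) in *. set (b := Derive F c) in *.
    assert (G1 : 0 <= (1 + F c) * (a - b)^2) by (apply Rmult_le_pos; [lra| apply pow2_ge_0]).
    assert (G2 : 0 <= (K - 1 - F c) * (a^2 + b^2)).
    { apply Rmult_le_pos; [unfold K; lra|]. pose proof (pow2_ge_0 a). pose proof (pow2_ge_0 b). lra. }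
    assert (G3 : 0 <= c * b^2) by (apply Rmult_le_pos; [lra| apply pow2_ge_0]).
    assert (Hx : 2 * a * b + 2 * b * (F c * a - c * b) - K * (a ^ 2 + b ^ 2) <= 0).
    { replace (F c * a) with ((a + 2) * a) by (unfold a; ring). unfold a in *. nra. }
    rewrite <- (Rmult_0_l (exp (-K*c))). apply Rmult_le_compat_r; lra. }
  unfold P in HPT. rewrite H0, Hd0 in HPT.
  replace ((2 - 2) ^ 2 + 0 ^ 2) with 0 in HPT by ring. rewrite Rmult_0_l in HPT.
  pose proof (exp_pos (-K*T)). pose proof (pow2_ge_0 (Derive F T)).
  assert (1 < (F T - 2)^2) by nra.
  nra.
Qed.


Lemma F_lt2 F c0 : is_F F c0 -> forall y, 0 <= y -> F y < 2.
Proof.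
  intros HF. assert (Hn := F_not2 F c0 HF (F0_not2 F c0 HF)).
  assert (Hc : continuity F) by (intros x; apply (contF F c0 HF)).
  destruct (exists_small F c0 HF) as [T [HT0 HT1]].
  intros y Hy. destruct (Rlt_or_le (F y) 2) as [|Hge]; auto. exfalso.
  destruct (Rlt_or_le (F 0) 2) as [H0|H0'].
  - destruct (IVT_gen F 0 y 2 Hc) as [x [Hx Hfx]].
    + rewrite Rmin_left, Rmax_right by lra. lra.
    + rewrite Rmin_left, Rmax_right in Hx by lra. apply (Hn x); tauto.
  - destruct (IVT_gen F 0 T 2 Hc) as [x [Hx Hfx]].
    + rewrite Rmin_right, Rmax_left by lra. lra.
    + rewrite Rmin_left, Rmax_right in Hx by lra. apply (Hn x); tauto.
Qed.

Lemma dF_neg F c0 : is_F F c0 -> forall y, 0 < y -> Derive F y < 0.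
Proof.
  intros HF y Hy. pose proof HF as HF'. destruct HF' as (_&Hpos&_&_&_&_&Hd0&_).
  assert (H := decr_strict (fun z => exp (z^2/2) * Derive F z) _ 0 y Hy (fun c _ => dG F c0 HF c)).
  cbv beta in H. rewrite Hd0, Rmult_0_r in H.
  assert (Hl : exp (y ^ 2 / 2) * Derive F y < 0).
  { apply H. intros c Hc. pose proof (F_lt2 F c0 HF c ltac:(lra)). pose proof (Hpos c).
    pose proof (exp_pos (c^2/2)). assert (F c * (F c - 2) < 0) by nra. nra. }
  pose proof (exp_pos (y^2/2)). nra.
Qed.

Lemma F_decr F c0 : is_F F c0 -> forall x y, 0 <= x -> x < y -> F y < F x.
Proof.
  intros HF x y Hx Hxy. apply (decr_strict F (Derive F) x y Hxy (fun c _ => dF F c0 HF c)).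
  intros c Hc. apply (dF_neg F c0 HF). lra.
Qed.

Lemma F0_gt1 F c0 : is_F F c0 -> 1 < F 0.
Proof.
  intros HF. pose proof HF as HF'. destruct HF' as (_&Hpos&_&_&_&_&Hd0&_).
  destruct (Rlt_or_le 1 (F 0)) as [|Hle]; auto. exfalso.
  set (W := fun y => Derive F y + y * F y).
  assert (HW : forall t, is_derive W t (F t ^ 2 - F t)).
  { intros t. unfold W.
    replace (F t ^ 2 - F t) with (Derive (Derive F) t + (1 * F t + t * Derive F t)).
    2:{ rewrite (odeF F c0 HF t). ring. }
    apply (is_derive_plus (Derive F) (fun y => y * F y)). apply (ddF F c0 HF).
    apply (is_derive_mult (fun y => y) F). auto_derive; auto. apply (dF F c0 HF).
    intros; apply Rmult_comm. }
  assert (Hneg : forall c, 0 < c -> F c ^ 2 - F c < 0).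
  { intros c Hc. pose proof (F_decr F c0 HF 0 c ltac:(lra) Hc). pose proof (Hpos c). nra. }
  assert (HW1 : W 1 < W 0).
  { apply (decr_strict W _ 0 1 Rlt_0_1 (fun c _ => HW c)). intros c Hc. apply Hneg; lra. }
  assert (HW0 : W 0 = 0) by (unfold W; rewrite Hd0; ring).
  assert (Hl := limW F c0 HF). apply is_lim_spec in Hl.
  destruct (Hl (mkposreal (- W 1) ltac:(lra))) as [M HM]. simpl in HM.
  set (y := Rmax M 1 + 1). pose proof (Rmax_l M 1). pose proof (Rmax_r M 1).
  specialize (HM y ltac:(unfold y; lra)). rewrite Rminus_0_r in HM.
  assert (HWy : W y < W 1).
  { apply (decr_strict W _ 1 y ltac:(unfold y; lra) (fun c _ => HW c)). intros c Hc. apply Hneg; lra. }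
  pose proof (Rle_abs (- W y)) as Ha. rewrite Rabs_Ropp in Ha. change (Rabs (W y) < - W 1) in HM. lra.
Qed.

Theorem lemma3p2 (F : R -> R) (c0 : R) :
  is_F F c0 ->
  (* (a) *)
  (forall x0 y, 0 <= x0 -> x0 <= y ->
     Derive F y =
       exp (- y ^ 2 / 2 + x0 ^ 2 / 2) * Derive F x0
       + RInt (fun z => exp (- y ^ 2 / 2 + z ^ 2 / 2) * F z * (F z - 2)) x0 y) /\
  (* (b) *)
  is_lim (fun y => exp (y ^ 2 / 2) * Derive F y / y ^ 2) p_infty (- c0) /\
  (* (c) *)
  (1 < F 0 < 2) /\
  (* (d) *)
  (forall x y, 0 <= x -> x < y -> F y < F x).
Proof.
  intros HF. split; [|split; [|split]].
  - apply (part_a F c0 HF).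
  - apply (part_b F c0 HF).
  - split. apply (F0_gt1 F c0 HF). apply (F_lt2 F c0 HF); lra.
  - apply (F_decr F c0 HF).
Qed.
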